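(* Let $n\ge5$ be odd and $M$ an $n\times n$ HW-matrix. There is no spin$^c$ set $S$ for $M$ with $|S|=n$.
   Context: $\mathcal S=\{0,1,2,3\}$ is the Klein four-group ($\mathbb Z_2$-vector space) with $x+x=0$, $1+2=3$, $1+3=2$, $2+3=1$. $\mathcal P_n$ is the power set of $\{1,\dots,n\}$ (addition = symmetric difference, product = intersection); $|U|_2=|U|\bmod 2$; $J_M(U)=\{j:\sum_{i\in U}M_{ij}=1\}$. $M$ is an HW-matrix if it has $1$ on the diagonal and $2$ or $3$ off the diagonal, all column sums are $0$, and $J_M(U)\ne\emptyset$ for all $U\ne\emptyset,\{1,\dots,n\}$. $S\in\mathcal P_n$ is a spin$^c$ set for $M$ if $|(J_M(U)+U)\cap S|_2=\binom{|U|}2\bmod 2$ for all $U\in\mathcal P_n$. *)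

(* Defs.v *)
From mathcomp Require Import all_boot.
Set Implicit Arguments. Unset Strict Implicit. Unset Printing Implicit Defensive.

(* Klein four-group S = {0,1,2,3}, encoded as 'I_4; addition is bitwise xor
   of the two-bit encodings (so x+x=0, 1+2=3, 1+3=2, 2+3=1). *)
Definition klein := 'I_4.

Definition kadd_nat (a b : nat) : nat :=
  (odd a (+) odd b) + ((odd a./2 (+) odd b./2) * 2).

Lemma kadd_lt (a b : nat) : kadd_nat a b < 4.
Proof. by rewrite /kadd_nat; case: (_ (+) _); case: (_ (+) _). Qed.

Definition kadd (x y : klein) : klein := Ordinal (kadd_lt x y).
Definition k0 : klein := @Ordinal 4 0 erefl.
Definition k1 : klein := @Ordinal 4 1 erefl.
Definition k2 : klein := @Ordinal 4 2 erefl.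
Definition k3 : klein := @Ordinal 4 3 erefl.

Definition colsum n (M : 'I_n -> 'I_n -> klein) (U : {set 'I_n}) (j : 'I_n) : klein :=
  foldr (fun i acc => kadd (M i j) acc) k0 (enum U).

Definition JM n (M : 'I_n -> 'I_n -> klein) (U : {set 'I_n}) : {set 'I_n} :=
  [set j | colsum M U j == k1].

(* symmetric difference = addition in P_n *)
Definition symdiff n (A B : {set 'I_n}) : {set 'I_n} := (A :\: B) :|: (B :\: A).

Definition HW_matrix n (M : 'I_n -> 'I_n -> klein) : Prop :=
  (forall i, M i i = k1) /\
  (forall i j, i != j -> M i j = k2 \/ M i j = k3) /\
  (forall j, colsum M [set: 'I_n] j = k0) /\
  (forall U : {set 'I_n}, U != set0 -> U != [set: 'I_n] -> JM M U != set0).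

Definition spinc_set n (M : 'I_n -> 'I_n -> klein) (S : {set 'I_n}) : Prop :=
  forall U : {set 'I_n},
    odd #|symdiff (JM M U) U :&: S| = odd 'C(#|U|, 2).

(* Main.v *)
Require Import Defs.
From mathcomp Require Import all_boot.

Lemma card_seqP (T : finType) (s : seq T) (P : pred T) :
  uniq s -> #|[set v | (v \in s) && P v]| = count P s.
Proof.
move=> us; rewrite -size_filter -(card_uniqP (filter_uniq P us)).
by apply: eq_card => v; rewrite inE mem_filter andbC.
Qed.

Lemma kadd_bits (a b : klein) :
  odd (kadd a b) = odd a (+) odd b /\ odd (kadd a b)./2 = odd a./2 (+) odd b./2.
Proof.
rewrite /kadd /= /kadd_nat.
by case: (odd a (+) odd b); case: (odd a./2 (+) odd b./2).
Qed.

Lemma colsum_bits n (M : 'I_n -> 'I_n -> klein) U j :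
  odd (colsum M U j) = odd #|[set i | (i \in U) && odd (M i j)]| /\
  odd (colsum M U j)./2 = odd #|[set i | (i \in U) && odd (M i j)./2]|.
Proof.
have E : forall P : pred 'I_n, #|[set i | (i \in U) && P i]| = count P (enum U).
  move=> P; rewrite -card_seqP ?enum_uniq //; apply: eq_card => v.
  by rewrite !inE mem_enum.
rewrite !E /colsum; elim: (enum U) => [|a s [IH1 IH2]] //=.
have [H1 H2] := kadd_bits (M a j) (foldr (fun i acc => kadd (M i j) acc) k0 s).
by rewrite H1 H2 IH1 IH2 !oddD !oddb.
Qed.

Lemma k1_bits (v : klein) : (v == k1) = odd v && ~~ odd v./2.
Proof. by case: v => [[|[|[|[|m]]]] H]. Qed.
Lemma k0_bits (v : klein) : v = k0 -> odd v = false.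
Proof. by move=> ->. Qed.

Theorem mainTheorem15 (n : nat) (M : 'I_n -> 'I_n -> klein) :
  5 <= n -> odd n -> HW_matrix M ->
  ~ (exists S : {set 'I_n}, spinc_set M S /\ #|S| = n).
Proof.
move=> n5 oddn [Hdiag [Hoff [Hcol Hne]]] [S [Hsp HS]].
have ST : S = setT.
  by apply/eqP; rewrite eqEcard subsetT cardsT card_ord HS leqnn.
subst S.
pose x i k := odd (M i k).
have b1 : forall i k, odd (M i k)./2 = (i != k).
  move=> i k; case: (eqVneq i k) => [->|ik]; first by rewrite Hdiag.
  by case: (Hoff _ _ ik) => ->.
have xd : forall i, x i i = true by move=> i; rewrite /x Hdiag.
have T3 : forall a b c, a != b -> a != c -> b != c ->
   ((x b a != x c a) + (x a b != x c b) + (x a c != x b c) == 1)%N.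
  move=> a b c ab ac bc.
  have us : uniq [:: a; b; c] by rewrite /= !inE negb_or ab ac bc.
  pose U := [set v | (v \in [:: a; b; c]) && true].
  pose agr v := odd (count (fun i => x i v) [:: a; b; c]).
  have HJ : JM M U = [set v | (v \in [:: a; b; c]) && agr v].
    apply/setP => v; rewrite /JM !inE k1_bits.
    have [-> ->] := colsum_bits _ M U v.
    have E : forall P : pred 'I_n, [set i | (i \in U) && P i] = [set i | (i \in [:: a; b; c]) && P i].
      by move=> P; apply/setP => i; rewrite !inE andbT.
    rewrite !E !card_seqP // /agr.
    rewrite /= !b1 -/(x a v) -/(x b v) -/(x c v).
    have ab1 := negbTE ab; have ac1 := negbTE ac; have bc1 := negbTE bc.
    have [ba1 ca1 cb1] : [/\ (b == a) = false, (c == a) = false & (c == b) = false].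
      by rewrite !(eq_sym _ a) (eq_sym c b) ab1 ac1 bc1.
    case: (eqVneq v a) => [->|va]; first by rewrite /= ?eqxx ?ab1 ?ac1 ?ba1 ?ca1 /= ?andbT.
    case: (eqVneq v b) => [->|vb]; first by rewrite /= ?eqxx ?ab1 ?bc1 ?ba1 ?cb1 /= ?andbT.
    case: (eqVneq v c) => [->|vc]; first by rewrite /= ?eqxx ?ac1 ?bc1 ?ca1 ?cb1 /= ?andbT.
    have va1 := negbTE va; have vb1 := negbTE vb; have vc1 := negbTE vc.
    rewrite eq_sym in va; rewrite eq_sym in vb; rewrite eq_sym in vc.
    have av1 := negbTE va; have bv1 := negbTE vb; have cv1 := negbTE vc.
    by rewrite /= ?va1 ?vb1 ?vc1 ?av1 ?bv1 ?cv1 /= ?andbF.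
  have HD : symdiff (JM M U) U :&: setT = [set v | (v \in [:: a; b; c]) && ~~ agr v].
    apply/setP => v; rewrite /symdiff HJ !inE andbT.
    by case: [|| v == a, v == b | v == c]; case: (agr v).
  have cU : #|U| = 3 by rewrite card_seqP.
  have h1 := Hsp U; rewrite HD cU card_seqP // /= in h1.
  have h2 : JM M U != set0.
    apply: Hne.
      by apply/set0Pn; exists a; rewrite !inE eqxx.
    apply/negP => /eqP UT; have := cU; rewrite UT cardsT card_ord => n3.
    by rewrite n3 in n5.
  rewrite HJ in h2; case/set0Pn: h2 => v; rewrite inE => /andP [vin av].
  move: h1 av; rewrite /agr /=.
  rewrite !inE in vin.
  case/or3P: vin => /eqP ->; rewrite ?xd /= ?oddD ?oddb;
    by case: (x b a); case: (x c a); case: (x a b); case: (x c b); case: (x a c); case: (x b c).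
have colf : forall i, odd #|[set m | (m != i) && x m i]|.
  move=> i; have [h _] := colsum_bits _ M setT i; rewrite Hcol /= in h.
  move: h; rewrite (cardsD1 i [set m | (m \in [set: 'I_n]) && odd (M m i)]).
  have -> : [set m | (m \in [set: 'I_n]) && odd (M m i)] :\ i = [set m | (m != i) && x m i].
    by apply/setP => m; rewrite !inE.
  rewrite inE in_setT /= Hdiag /= => h.
  by move: h; case: (odd _).
have n0 : 0 < n by apply: leq_trans n5.
pose j : 'I_n := Ordinal n0.
pose C1 := [set i | (i != j) && x i j].
have : C1 != set0.
  by apply/negP => /eqP h0; have := colf j; rewrite -/C1 h0 cards0.
case/set0Pn => i0 i0C.
have agree0 : forall i m, i \in C1 -> m != j -> ~~ x m j -> x m i = x j i.
  move=> i m; rewrite inE => /andP [ij xij] mj xmj.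
  have im : i != m by apply/eqP => E; subst; rewrite xij in xmj.
  have jm : j != m by rewrite eq_sym.
  move: (T3 i j m ij im jm); rewrite xij (negbTE xmj).
  by case: (x j i); case: (x m i); case: (x i m); case: (x j m).
pose beats m i := x m i != x j i.
have excl : forall m i, m \in C1 -> i \in C1 -> m != i -> beats m i = ~~ beats i m.
  move=> m i; rewrite !inE => /andP [mj xmj] /andP [ij xij] mi.
  move: (T3 j m i); rewrite eq_sym mj eq_sym ij mi => /(_ isT isT isT).
  rewrite xmj xij /beats.
  by case: (x j m); case: (x i m); case: (x j i); case: (x m i).
have trans : forall m k i, m \in C1 -> k \in C1 -> i \in C1 -> m != k -> k != i -> m != i ->
    beats m k -> beats k i -> beats m i.
  move=> m k i mC kC iC mk ki mi.
  move: (excl k i kC iC ki) (excl m k mC kC mk) (excl m i mC iC mi) (T3 m k i mk mi ki).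
  rewrite /beats.
  by case: (x j k); case: (x j i); case: (x j m); case: (x k m); case: (x i m);
     case: (x m k); case: (x i k); case: (x m i); case: (x k i).
pose inS i := [set m | (m \in C1) && (m != i) && beats m i].
have parity : forall i, i \in C1 -> odd #|inS i|.
  move=> i iC; have ci := colf i.
  case xji: (x j i).
  - have E : [set m | (m != i) && ~~ x m i] = inS i.
      apply/setP => m; rewrite !inE /beats xji.
      case: (eqVneq m j) => [->|mj]; first by rewrite xji andbF.
      case xmj: (x m j).
        by rewrite /=; case: (x m i); rewrite ?andbT ?andbF.
      by rewrite (agree0 i m iC mj (negbT xmj)) xji /= !andbF.
    have := cardsID [set m | x m i] [set~ i]; rewrite cardsC1 card_ord.
    have -> : [set~ i] :&: [set m | x m i] = [set m | (m != i) && x m i].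
      by apply/setP => m; rewrite !inE.
    have -> : [set~ i] :\: [set m | x m i] = [set m | (m != i) && ~~ x m i].
      by apply/setP => m; rewrite !inE andbC.
    rewrite E => hs.
    have : odd n.-1 = false by move: oddn; rewrite -(prednK n0) /=; case: (odd n.-1).
    by rewrite -hs oddD ci; case: (odd _).
  - have E : [set m | (m != i) && x m i] = inS i.
      apply/setP => m; rewrite !inE /beats xji.
      case: (eqVneq m j) => [->|mj]; first by rewrite xji andbF.
      case xmj: (x m j).
        by rewrite /=; case: (x m i); rewrite ?andbT ?andbF.
      by rewrite (agree0 i m iC mj (negbT xmj)) xji /= !andbF.
    by rewrite -E.
case: (@arg_minnP _ i0 (fun i => i \in C1) (fun i => #|inS i|) i0C) => i iC imin.
have : inS i == set0.
  apply/negPn/negP => /set0Pn [k kin].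
  have kin' := kin; rewrite inE in kin'; case/andP: kin' => /andP [kC ki] bki.
  have := imin k kC; rewrite leqNgt => /negP; apply.
  apply: proper_card; apply/properP; split.
    apply/subsetP => m; rewrite inE => /andP [/andP [mC mk] bmk]; rewrite inE.
    have mi : m != i.
      apply/eqP => E; subst m.
      by move: (excl k i kC iC ki); rewrite bki bmk.
    by rewrite mC mi (trans m k i mC kC iC mk ki mi bmk bki).
  by exists k => //; rewrite inE eqxx andbF /=.
by move=> /eqP E; have := parity i iC; rewrite E cards0.
Qed.
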